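(* At any time during the execution of DASH (described in the context) on an initially connected graph, every surviving node $v$ satisfies $\mathrm{rem}(v)\ge 2^{\delta(v)/2}$.
   Context: Model: a network is an undirected graph, initially a connected graph $G_0$ on $n$ nodes. In each round an adversary deletes one surviving node $v$ with its incident edges, and then DASH adds edges. $G$ is the current network; $E'$ is the set of healing edges added so far whose endpoints both survive; $G'=(V(G),E')$. $N(u,G)$, $N(u,G')$ are neighbor sets in $G$, $G'$; $\delta(u)=\deg_G(u)-\deg_{G_0}(u)$ is the degree increase of $u$ relative to its initial degree. DASH: initially every node receives an ID drawn independently and uniformly from $[0,1]$ (its initial ID). When $v$ is deleted (quantities evaluated just before the deletion): partition the nodes of $N(v,G)$ whose current ID differs from that of $v$ into classes of equal current ID; $UN(v,G)$ consists of one node per class, the one with lowest initial ID. Let $S=UN(v,G)\cup N(v,G')$. Order $S$ by increasing $\delta$ and place it in this order into a complete binary tree with $|S|$ positions, filled level by level from the top and left to right; add to the network and to $E'$ the edge between each node of $S$ and the node at its parent position. Then all nodes of the component of $G'$ containing $S$ set their ID to the minimum current ID in $S$. Weights: every node $u$ has weight $w(u)$, initially $1$; when a node $v$ is deleted, $w(v)$ is added to the weight of an arbitrarily chosen node of $N(v,G')$. For a subgraph $H$, $W(H)$ is the sum of the weights of its vertices. For distinct surviving nodes $x,y$, $T(x,y)$ is the connected component of $G'-y$ containing $x$. Define $\mathrm{rem}(v)=\sum_{u\in N(v,G')}W(T(u,v))-\max_{u\in N(v,G')}W(T(u,v))+w(v)$ (the maximum over the empty set being $0$). *)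

(* Defs.v *)
From mathcomp Require Import reals.
From HB Require Import structures.
From mathcomp Require Import all_boot all_order all_algebra.

Set Implicit Arguments. Unset Strict Implicit. Unset Printing Implicit Defensive.
Import Order.TTheory GRing.Theory Num.Theory.

Section DASH.
Variable R : realType.
Variable T : finType.
Variable G0 : rel T.
Variable id0 : T -> R.

(* A state of the execution. The current network G has vertex set [alive]
   and edge relation [E] restricted to [alive]; [H] records all healing edges
   added so far, and E' = H restricted to [alive]. *)
Record state := State {
  alive : {set T};
  E : rel T;
  H : rel T;
  cid : T -> R;
  w : T -> nat
}.

Definition init_state : state :=
  State [set: T] G0 (fun _ _ => false) id0 (fun _ => 1%N).

Definition nbrG (s : state) (u : T) : {set T} := [set x in alive s | E s u x].
Definition nbrGp (s : state) (u : T) : {set T} := [set x in alive s | H s u x].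

Definition delta (s : state) (u : T) : int :=
  (#|nbrG s u|%:Z - #|[set x | G0 u x]|%:Z)%R.

Definition Gp_rel (s : state) : rel T :=
  fun a b => [&& a \in alive s, b \in alive s & H s a b].

Definition Gp_minus (s : state) (y : T) : rel T :=
  fun a b => [&& a \in alive s :\ y, b \in alive s :\ y & H s a b].

Definition Tcomp (s : state) (x y : T) : {set T} :=
  [set z | connect (Gp_minus s y) x z].

Definition Wt (s : state) (A : {set T}) : nat := (\sum_(z in A) w s z)%N.

Definition rem_dash (s : state) (v : T) : nat :=
  ((\sum_(u in nbrGp s v) Wt s (Tcomp s u v))
   - (\max_(u in nbrGp s v) Wt s (Tcomp s u v)) + w s v)%N.

(* edges of the complete binary tree whose positions (level order, from the
   top, left to right; 0-indexed) are filled by the list l: position i >= 1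
   has parent position (i-1)/2. *)
Definition tree_edge (l : seq T) (a b : T) : bool :=
  has (fun i => ((a == nth a l i) && (b == nth a l (i.-1 %/ 2)))
             || ((b == nth a l i) && (a == nth a l (i.-1 %/ 2))))
      (iota 1 (size l).-1).

(* U is a valid choice of UN(v,G): one node per class of equal current ID
   among the neighbours of v with current ID different from v's, namely one
   with lowest initial ID in its class. *)
Definition UN_spec (s : state) (v : T) (U : {set T}) : Prop :=
  let C := [set x in nbrG s v | cid s x != cid s v] in
  [/\ U \subset C,
      (forall x, x \in C -> exists2 u, u \in U & cid s u = cid s x),
      (forall u1 u2, u1 \in U -> u2 \in U -> cid s u1 = cid s u2 -> u1 = u2)
    & (forall u y, u \in U -> y \in C -> cid s y = cid s u -> (id0 u <= id0 y)%R)].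

(* The remaining
   freedom (ties in UN, order of S among equal delta, the node receiving
   w(v)) is existentially quantified, i.e. every such resolution is allowed. *)
Definition dash_step (s : state) (v : T) (s' : state) : Prop :=
  v \in alive s /\
  exists (U : {set T}) (l : seq T) (r : T) (m : R),
    let S := U :|: nbrGp s v in
    [/\ UN_spec s v U,
        uniq l /\ [set x in l] = S,
        sorted (fun a b => (delta s a <= delta s b)%R) l,
        (nbrGp s v != set0 -> r \in nbrGp s v)
      & (S != set0 -> (m \in [seq cid s y | y <- l]) /\
                      (forall y, y \in l -> (m <= cid s y)%R))] /\
    [/\ alive s' = alive s :\ v,
        E s' = (fun a b => E s a b || tree_edge l a b),
        H s' = (fun a b => H s a b || tree_edge l a b),
        cid s' = (fun x => if [exists y in S, connect (Gp_rel s') y x]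
                           then m else cid s x)
      & w s' = (if nbrGp s v == set0 then w s
                else fun x => (w s x + (x == r) * w s v)%N)].

Inductive reachable : state -> Prop :=
| reach_init : reachable init_state
| reach_step s v s' : reachable s -> dash_step s v s' -> reachable s'.

End DASH.

(* Main.v *)
Require Import Defs.
From HB Require Import structures.
From mathcomp Require Import reals.
From mathcomp Require Import all_boot all_order all_algebra zify.
Set Implicit Arguments. Unset Strict Implicit. Unset Printing Implicit Defensive.
Import Order.TTheory GRing.Theory Num.Theory.

Section Gen.
Variable T : finType.
Implicit Types (e : rel T) (a b c d v : T).

Lemma csym e x y : symmetric e -> connect e x y = connect e y x.
Proof. by move/sym_connect_sym; apply. Qed.

Definition rmv e v : rel T := fun a b => [&& a != v, b != v & e a b].

Lemma connect_ind' e a (P : T -> Prop) : P a ->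
  (forall c d, connect e a c -> e c d -> P c -> P d) ->
  forall b, connect e a b -> P b.
Proof.
move=> Pa IH b /connectP[p pth ->]; elim/last_ind: p pth => [//|p y IHp].
rewrite rcons_path last_rcons => /andP[pth ey].
apply: (IH (last a p)) => //; last exact: IHp.
by apply/connectP; exists p.
Qed.

Lemma conn_restrict e (P : pred T) a b : connect e a b ->
  (forall z, connect e a z -> P z) ->
  connect [rel x y | [&& P x, P y & e x y]] a b.
Proof.
move=> cab HP; move: b cab; apply: connect_ind' => // c d ac ecd Hc.
apply: connect_trans Hc (connect1 _) => /=.
by rewrite ecd HP // (HP d) //; apply: connect_trans ac (connect1 ecd).
Qed.

Lemma conn_last e a b : connect e a b -> a != b -> exists c, e c b.
Proof.
move=> cab; suff : b = a \/ exists c, e c b.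
  by case=> [->|//]; rewrite eqxx.
move: b cab; apply: connect_ind'; first by left.
by move=> c d _ ecd _; right; exists c.
Qed.

Lemma connect_mono e e' : subrel e e' -> subrel (connect e) (connect e').
Proof. by move=> H; apply: connect_sub => x y /H /connect1. Qed.

Definition LA e := forall v u1 u2, e v u1 -> e v u2 -> u1 != u2 ->
  ~~ connect (rmv e v) u1 u2.

Definition addE e a b : rel T :=
  fun x y => [|| e x y, (x == a) && (y == b) | (x == b) && (y == a)].

Lemma conn_add e a b x y : connect (addE e a b) x y ->
  [\/ connect e x y, connect e x a && connect e b y |
      connect e x b && connect e a y].
Proof.
move: y; apply: connect_ind'; first by apply: Or31.
move=> c d _ /or3P[ecd|/andP[/eqP-> /eqP->]|/andP[/eqP-> /eqP->]].
- case=> [xc|/andP[xa bc]|/andP[xb ac]].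
  + by apply: Or31; apply: connect_trans xc (connect1 ecd).
  + by apply: Or32; rewrite xa (connect_trans bc (connect1 ecd)).
  + by apply: Or33; rewrite xb (connect_trans ac (connect1 ecd)).
- case=> [xa|/andP[xa _]|/andP[xb _]].
  + by apply: Or32; rewrite xa connect0.
  + by apply: Or32; rewrite xa connect0.
  + by apply: Or31.
- case=> [xb|/andP[xa _]|/andP[xb _]].
  + by apply: Or33; rewrite xb connect0.
  + by apply: Or31.
  + by apply: Or33; rewrite xb connect0.
Qed.

Lemma rmv_sym e v : symmetric e -> symmetric (rmv e v).
Proof. by move=> se x y; rewrite /rmv se andbCA. Qed.

Lemma addE_sym e a b : symmetric e -> symmetric (addE e a b).
Proof.
move=> se x y; rewrite /addE se; congr (_ || _); rewrite orbC.
by congr (_ || _); rewrite andbC.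
Qed.

Lemma conn_rmv e v x y : connect (rmv e v) x y -> connect e x y.
Proof. by apply: connect_mono => p q /and3P[]. Qed.

Lemma LA_add_end e a b u1 u2 : symmetric e -> LA e -> ~~ connect e a b ->
  addE e a b a u1 -> addE e a b a u2 -> u1 != u2 ->
  ~~ connect (rmv (addE e a b) a) u1 u2.
Proof.
move=> se la nab h1 h2 n12.
have E : rmv (addE e a b) a =2 rmv e a.
  move=> p q; rewrite /rmv /addE.
  by case: (p =P a); case: (q =P a) => //= _ _; rewrite !andbF !orbF.
rewrite (eq_connect E).
have ab : a != b by apply: contraNneq nab => ->; rewrite connect0.
have nbr : forall u, addE e a b a u -> e a u \/ u = b.
  move=> u /or3P[|/andP[_ /eqP]|/andP[/eqP ab' _]]; [by left|by right|].
  by move: ab; rewrite ab' eqxx.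
case: (nbr _ h1) => [e1|E1]; case: (nbr _ h2) => [e2|E2]; rewrite ?E1 ?E2.
- exact: la.
- apply/negP => c; move/negP: nab; apply.
  apply: connect_trans (connect1 e1) _.
  exact: conn_rmv c.
- apply/negP => c; move/negP: nab; apply.
  apply: connect_trans (connect1 e2) _; rewrite csym //.
  exact: conn_rmv c.
- by rewrite E1 E2 eqxx in n12.
Qed.

Lemma LA_add e a b : symmetric e -> LA e -> ~~ connect e a b -> LA (addE e a b).
Proof.
move=> se la nab v u1 u2 h1 h2 n12.
case: (v =P a) => [Ev|va]; first by subst v; exact: LA_add_end.
case: (v =P b) => [Ev|vb].
  subst v.
  have E : addE e a b =2 addE e b a.
    by move=> p q; rewrite /addE [X in _ || X]orbC.
  have nba : ~~ connect e b a by rewrite csym.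
  rewrite (eq_connect (_ : rmv (addE e a b) b =2 rmv (addE e b a) b)); last first.
    by move=> p q; rewrite /rmv E.
  by apply: LA_add_end; rewrite // -E.
have nbr : forall u, addE e a b v u -> e v u.
  move=> u /or3P[//|/andP[/eqP]|/andP[/eqP]] //.
have e1 := nbr _ h1; have e2 := nbr _ h2.
apply/negP => c.
have E : rmv (addE e a b) v =2 addE (rmv e v) a b.
  move=> p q; rewrite /rmv /addE; apply/idP/idP.
    move=> /and3P[pv qv /or3P[E|A|B]]; first by rewrite pv qv E.
      by rewrite A orbT.
    by rewrite B !orbT.
  have av : a != v by rewrite eq_sym; apply/eqP.
  have bv : b != v by rewrite eq_sym; apply/eqP.
  move=> /or3P[/and3P[-> -> ->]//|/andP[/eqP-> /eqP->]|/andP[/eqP-> /eqP->]].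
    by rewrite av bv !eqxx orbT.
  by rewrite av bv !eqxx !orbT.
move: c; rewrite (eq_connect E) => /conn_add[c|/andP[c1 c2]|/andP[c1 c2]].
- by move/negP: (la _ _ _ e1 e2 n12).
- move/negP: nab; apply.
  have su : connect e a v.
    rewrite csym //; apply: connect_trans (connect1 e1) _.
    exact: conn_rmv c1.
  apply: connect_trans su (connect_trans (connect1 e2) _).
  rewrite csym //; exact: conn_rmv c2.
- move/negP: nab; apply.
  have su : connect e b v.
    rewrite csym //; apply: connect_trans (connect1 e1) _.
    exact: conn_rmv c1.
  rewrite csym //.
  apply: connect_trans su (connect_trans (connect1 e2) _).
  rewrite csym //; exact: conn_rmv c2.
Qed.

End Gen.

Section Tree.
Variable T : finType.
Variable x0 : T.
Variable l : seq T.
Implicit Types (e : rel T) (a b c d v : T).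

Definition par j := (j.-1) %/ 2.
Local Notation L i := (nth x0 l i).

Definition tedge i a b :=
  ((a == L i) && (b == L (par i))) || ((b == L i) && (a == L (par i))).
Definition teN n : rel T := fun a b => has (fun i => tedge i a b) (iota 1 n).

Lemma par_lt j : 0 < j -> par j < j.
Proof. rewrite /par; case: j => // j _ /=; rewrite ltnS; exact: leq_div. Qed.

Lemma tree_edgeE a b : tree_edge l a b = teN (size l).-1 a b.
Proof.
rewrite /tree_edge /teN; apply: eq_in_has => i; rewrite mem_iota => /andP[i1 i2].
have ik : i < size l by move: i2 i1; case: (size l) => //= *; lia.
have pk : par i < size l by apply: ltn_trans (par_lt i1) ik.
by rewrite /tedge -/(par i) (set_nth_default x0 a ik) (set_nth_default x0 a pk).
Qed.

Lemma teN_sym n : symmetric (teN n).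
Proof. move=> a b; apply: eq_has => i; by rewrite /tedge orbC. Qed.

Lemma teN0 : teN 0 =2 (fun _ _ => false).
Proof. by []. Qed.

Lemma teNS n : teN n.+1 =2 addE (teN n) (L n.+1) (L (par n.+1)).
Proof.
move=> a b; rewrite /teN /addE; have -> : iota 1 n.+1 = iota 1 n ++ [:: n.+1].
  by rewrite -[n.+1 in LHS]addn1 iotaD.
by rewrite has_cat /= orbF /tedge [X in _ || (_ || X)]andbC.
Qed.

Lemma teN_mem n a b : teN n a b -> exists i, [/\ 1 <= i <= n, a == L i & b == L (par i)]
  \/ [/\ 1 <= i <= n, b == L i & a == L (par i)].
Proof.
move/hasP=> [i]; rewrite mem_iota => /andP[i1 i2] /orP[/andP[ha hb]|/andP[ha hb]];
exists i; [left|right]; split=> //; rewrite i1 /=; by move: i2; rewrite add1n ltnS.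
Qed.

Lemma teN_intro n i : 1 <= i <= n -> teN n (L i) (L (par i)).
Proof.
move=> /andP[i1 i2]; apply/hasP; exists i; first by rewrite mem_iota i1 add1n ltnS.
by rewrite /tedge !eqxx.
Qed.

Lemma par1 n : par n.*2.+1 = n.
Proof. rewrite /par -muln2; lia. Qed.
Lemma par2 n : par n.*2.+2 = n.
Proof. rewrite /par -muln2; lia. Qed.

Lemma rng i k : 0 < i -> i < k -> 1 <= i <= k.-1.
Proof. move=> *; apply/andP; split; lia. Qed.

Definition UE e n : rel T := fun a b => e a b || teN n a b.

Lemma UES e n : UE e n.+1 =2 addE (UE e n) (L n.+1) (L (par n.+1)).
Proof. by move=> a b; rewrite /UE teNS /addE !orbA. Qed.

Lemma UE_sym e n : symmetric e -> symmetric (UE e n).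
Proof. by move=> se a b; rewrite /UE se teN_sym. Qed.

Section Dist.
Variable e : rel T.
Hypothesis se : symmetric e.
Hypothesis dist : forall i j, i < size l -> j < size l -> i != j ->
  ~~ connect e (L i) (L j).

Lemma UE_J n : n < size l -> forall p q, connect (UE e n) p q ->
  connect e p q \/ exists i1 i2, [/\ i1 <= n, i2 <= n,
     connect e p (L i1) & connect e (L i2) q].
Proof.
elim: n => [_ p q|n IH nk p q].
  by rewrite (eq_connect (_ : UE e 0 =2 e)); [left|move=> a b; rewrite /UE orbF].
have pn : par n.+1 <= n by rewrite -ltnS par_lt.
rewrite (eq_connect (UES e n)) => /conn_add[c|/andP[c1 c2]|/andP[c1 c2]].
- case: (IH (ltnW nk) _ _ c) => [|[i1 [i2 [h1 h2 h3 h4]]]]; first by left.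
  by right; exists i1, i2; split=> //; apply: leqW.
- right.
  have [i1 [h1 h3]] : exists i1, i1 <= n.+1 /\ connect e p (L i1).
    case: (IH (ltnW nk) _ _ c1) => [|[j1 [j2 [g1 g2 g3 g4]]]]; first by exists n.+1.
    by exists j1; split=> //; apply: leqW.
  have [i2 [h2 h4]] : exists i2, i2 <= n.+1 /\ connect e (L i2) q.
    case: (IH (ltnW nk) _ _ c2) => [|[j1 [j2 [g1 g2 g3 g4]]]].
      by exists (par n.+1); split=> //; apply: leqW.
    by exists j2; split=> //; apply: leqW.
  by exists i1, i2.
- right.
  have [i1 [h1 h3]] : exists i1, i1 <= n.+1 /\ connect e p (L i1).
    case: (IH (ltnW nk) _ _ c1) => [|[j1 [j2 [g1 g2 g3 g4]]]].
      by exists (par n.+1); split=> //; apply: leqW.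
    by exists j1; split=> //; apply: leqW.
  have [i2 [h2 h4]] : exists i2, i2 <= n.+1 /\ connect e (L i2) q.
    case: (IH (ltnW nk) _ _ c2) => [|[j1 [j2 [g1 g2 g3 g4]]]]; first by exists n.+1.
    by exists j2; split=> //; apply: leqW.
  by exists i1, i2.
Qed.

Lemma UE_LA n : LA e -> n < size l -> LA (UE e n).
Proof.
move=> la; elim: n => [_|n IH nk].
  by move=> v u1 u2; rewrite /UE /= !orbF (eq_connect (_ : rmv (UE e 0) v =2 rmv e v));
    [apply: la| move=> a b; rewrite /rmv /UE orbF].
have pn : par n.+1 <= n by rewrite -ltnS par_lt.
move=> v u1 u2 h1 h2 n12.
rewrite (eq_connect (_ : rmv (UE e n.+1) v =2 rmv (addE (UE e n) (L n.+1) (L (par n.+1))) v)); last first.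
  by move=> a b; rewrite /rmv UES.
move: h1 h2; rewrite !UES => h1 h2.
apply: (LA_add (UE_sym n se) (IH (ltnW nk))) => //.
apply/negP => /(UE_J (ltnW nk)) [c|[i1 [i2 [hi1 hi2 c1 c2]]]].
  have np : n.+1 != par n.+1 by rewrite neq_ltn par_lt ?orbT.
  by move/negP: (dist nk (leq_ltn_trans pn (ltnW nk)) np); apply.
have np : n.+1 != i1 by rewrite neq_ltn ltnS hi1 orbT.
by move/negP: (dist nk (leq_ltn_trans hi1 (ltnW nk)) np); apply.
Qed.

End Dist.

Lemma tree_conn0 i : i < size l -> connect (teN (size l).-1) (L i) (L 0).
Proof.
elim: i {-2}i (leqnn i) => [|n IH] i.
  by rewrite leqn0 => /eqP-> _; apply: connect0.
case: i => [_ _|i]; first exact: connect0.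
rewrite ltnS => iN ik.
have pl : par i.+1 < i.+1 by apply: par_lt.
apply: connect_trans (connect1 (teN_intro _)) (IH _ _ _).
- by rewrite /= -ltnS prednK ?ik // (leq_trans _ ik).
- by rewrite -ltnS (leq_trans pl).
- exact: ltn_trans pl ik.
Qed.

Lemma tree_conn a b : a \in l -> b \in l -> connect (teN (size l).-1) a b.
Proof.
move=> /(nthP x0)[i ik <-] /(nthP x0)[j jk <-].
apply: connect_trans (tree_conn0 ik) _; rewrite csym; last exact: teN_sym.
exact: tree_conn0.
Qed.

Section Avoid.
Hypothesis ul : uniq l.
Variable iv : nat.
Hypothesis ivk : iv < size l.
Local Notation v := (L iv).
Local Notation te := (teN (size l).-1).
Local Notation te' := (rmv te v).

Lemma Lneq j : j < size l -> j != iv -> L j != v.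
Proof. by move=> jk; rewrite nth_uniq. Qed.

Lemma par_eq i : 0 < i -> (par i == iv) = (i == iv.*2.+1) || (i == iv.*2.+2).
Proof. rewrite /par => i0; apply/eqP/orP; rewrite -!muln2; [move=> <-|]; lia. Qed.

Lemma te_edge i : 1 <= i < size l -> i != iv -> par i != iv -> te' (L i) (L (par i)).
Proof.
move=> /andP[i1 ik] h1 h2; rewrite /rmv Lneq // Lneq //; last by apply: ltn_trans (par_lt i1) ik.
by apply: teN_intro; rewrite i1 -ltnS prednK // (leq_ltn_trans _ ik).
Qed.

Lemma C_root j : j < size l -> j != iv -> j < iv.*2.+1 -> connect te' (L j) (L 0).
Proof.
elim: j {-2}j (leqnn j) => [|n IH] j.
  by rewrite leqn0 => /eqP-> _; rewrite connect0.
case: j => [*|j]; first exact: connect0.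
rewrite ltnS => jn jk jiv jlt.
have pl : par j.+1 < j.+1 by apply: par_lt.
have pne : par j.+1 != iv.
  by rewrite par_eq //; apply/negP => /orP[] /eqP E; move: jlt; rewrite E -!muln2; lia.
have e1 : te' (L j.+1) (L (par j.+1)) by apply: te_edge.
apply: connect_trans (connect1 e1) (IH _ _ _ pne _).
- by rewrite -ltnS (leq_trans pl).
- exact: ltn_trans pl jk.
- exact: ltn_trans pl jlt.
Qed.

Lemma TN j : j < size l -> j != iv -> exists t, te v t /\ connect te' t (L j).
Proof.
elim: j {-2}j (leqnn j) => [|n IH] j.
  rewrite leqn0 => /eqP-> jk jiv.
  have iv0 : 0 < iv by rewrite lt0n eq_sym.
  exists (L (par iv)); split.
    by apply: teN_intro; apply: rng.
  apply: C_root; first exact: ltn_trans (par_lt iv0) ivk.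
    by rewrite neq_ltn par_lt.
  by apply: ltn_trans (par_lt iv0) _; rewrite ltnS -addnn leq_addr.
case: j => [jn jk jiv|j]; first by apply: (IH 0).
rewrite ltnS => jn jk jiv.
have pl : par j.+1 < j.+1 by apply: par_lt.
case: (eqVneq (par j.+1) iv) => [pe|pne].
  exists (L j.+1); split; last exact: connect0.
  by rewrite -pe teN_sym; apply: teN_intro; apply: rng.
have pj : par j.+1 <= n by rewrite (leq_trans _ jn) // -ltnS.
have [t [ht ct]] := IH (par j.+1) pj (ltn_trans pl jk) pne.
exists t; split=> //; apply: connect_trans ct (connect1 _).
rewrite rmv_sym; last exact: teN_sym.
exact: te_edge.
Qed.

Lemma TN2 : (iv.*2.+2 < size l) \/ (0 < iv /\ iv.*2.+1 < size l) ->
  exists t1 t2 j1 j2, [/\ t1 != t2, te v t1, te v t2,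
    connect te' t1 (L j1) & connect te' t2 (L j2)] /\
    [/\ iv < j1, j1 < size l, iv < j2 & j2 < size l].
Proof.
have child : forall i, iv.*2 < i -> i < size l -> par i = iv -> te v (L i).
  move=> i i1 ik pe; rewrite teN_sym -pe; apply: teN_intro.
  by rewrite (leq_ltn_trans _ i1) // -ltnS prednK // (leq_ltn_trans _ ik).
case=> [h|[iv0 h]].
  exists (L iv.*2.+1), (L iv.*2.+2), iv.*2.+1, iv.*2.+2; split; last first.
    by move: h; rewrite -!muln2 => h; split; lia.
  split.
  - by rewrite nth_uniq // ?(ltn_trans _ h) // eqSS neq_ltn ltnSn.
  - by apply: child; rewrite ?par1 ?(ltn_trans _ h) // ?ltnSn.
  - by apply: child; rewrite ?par2.
  - exact: connect0.
  - exact: connect0.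
exists (L iv.*2.+1), (L (par iv)), iv.*2.+1, iv.+1; split; last first.
  by move: h iv0; rewrite -!muln2 => h iv0; split; lia.
split.
- rewrite nth_uniq // ?(ltn_trans (par_lt iv0)) // neq_ltn; apply/orP; right.
  by apply: ltn_trans (par_lt iv0) _; rewrite ltnS -addnn leq_addr.
- by apply: child; rewrite ?par1 ?ltnSn.
- by apply: teN_intro; apply: rng.
- exact: connect0.
- apply: connect_trans (C_root _ _ _) _.
  + exact: ltn_trans (par_lt iv0) ivk.
  + by rewrite neq_ltn par_lt.
  + by apply: ltn_trans (par_lt iv0) _; rewrite ltnS -addnn leq_addr.
  rewrite csym; last exact: rmv_sym (@teN_sym _).
  apply: C_root.
  + by apply: leq_ltn_trans h; rewrite -addnn; lia.
  + by rewrite neq_ltn ltnSn orbT.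
  + by rewrite ltnS -addnn; lia.
Qed.

Lemma TN_sub t : te v t -> t \in
  ((if 0 < iv then [set L (par iv)] else set0) :|:
   (if iv.*2.+1 < size l then [set L iv.*2.+1] else set0) :|:
   (if iv.*2.+2 < size l then [set L iv.*2.+2] else set0)).
Proof.
move=> /teN_mem[i [[/andP[i1 ik] /eqP hv /eqP ht]|[/andP[i1 ik] /eqP ht /eqP hv]]].
  have ik' : i < size l by move: ik i1; clear; lia.
  have E : i = iv by apply/eqP; rewrite -(nth_uniq x0 ik' ivk ul) hv.
  subst i; rewrite i1 !inE ht eqxx; done.
have ik' : i < size l by move: ik i1; clear; lia.
have pk : par i < size l by apply: ltn_trans (par_lt i1) ik'.
have E : par i = iv by apply/eqP; rewrite -(nth_uniq x0 pk ivk ul) hv.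
move/eqP: E; rewrite par_eq // => /orP[] /eqP E; subst i.
  by rewrite ik' !inE ht eqxx /= orbT.
by rewrite ik' !inE ht eqxx /= !orbT.
Qed.

Lemma TN_card : #|[set t | te v t]| <= 3.
Proof.
apply: (leq_trans (subset_leq_card (_ : _ \subset ((if 0 < iv then [set L (par iv)] else set0) :|:
   (if iv.*2.+1 < size l then [set L iv.*2.+1] else set0) :|:
   (if iv.*2.+2 < size l then [set L iv.*2.+2] else set0))))).
  by apply/subsetP => t; rewrite inE; apply: TN_sub.
apply: (leq_trans (leq_card_setU _ _)); rewrite -[3]/(2 + 1); apply: leq_add.
  apply: (leq_trans (leq_card_setU _ _)); rewrite -[2]/(1 + 1); apply: leq_add.
  all: by case: ifP; rewrite ?cards1 ?cards0.
Qed.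

Lemma TN_card1 : ~ ((iv.*2.+2 < size l) \/ (0 < iv /\ iv.*2.+1 < size l)) ->
  #|[set t | te v t]| <= 1.
Proof.
move=> nh.
apply: (leq_trans (subset_leq_card (_ : _ \subset ((if 0 < iv then [set L (par iv)] else set0) :|:
   (if iv.*2.+1 < size l then [set L iv.*2.+1] else set0) :|:
   (if iv.*2.+2 < size l then [set L iv.*2.+2] else set0))))).
  by apply/subsetP => t; rewrite inE; apply: TN_sub.
have h2 : (iv.*2.+2 < size l) = false by apply/negP => h; apply: nh; left.
rewrite h2 setU0.
case: (posnP iv) => [->|iv0] /=; first by rewrite set0U; case: ifP; rewrite ?cards1 ?cards0.
have h1 : (iv.*2.+1 < size l) = false by apply/negP => h; apply: nh; right.
by rewrite h1 setU0 cards1.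
Qed.

End Avoid.

End Tree.

Section Arith.
Variable T : finType.
Implicit Types (b : T -> nat).

Lemma max_le (N0 : {set T}) b u : u \in N0 -> b u <= \max_(t in N0) b t.
Proof. by move=> h; apply: (leq_bigmax_cond u h). Qed.

Lemma max_le_sum (N0 : {set T}) b : \max_(t in N0) b t <= \sum_(t in N0) b t.
Proof.
apply/bigmax_leqP => u hu; rewrite (big_setD1 u hu) /=; exact: leq_addr.
Qed.

Lemma sum_max_D1 (N0 : {set T}) b x :
  \sum_(u in N0) b u - \max_(u in N0) b u <= \sum_(u in N0 :\ x) b u.
Proof.
case: (boolP (x \in N0)) => hx.
  rewrite (big_setD1 x hx) /=; have := max_le b hx; lia.
rewrite (_ : N0 :\ x = N0) ?leq_subr //; apply/setP => y; rewrite !inE.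
by case: eqP => // ->; rewrite (negbTE hx).
Qed.

Lemma sum_sub (N0 N1 : {set T}) b : N0 \subset N1 -> \sum_(u in N0) b u <= \sum_(u in N1) b u.
Proof.
move=> /subsetP sub; rewrite big_mkcond [X in _ <= X]big_mkcond /=.
apply: leq_sum => u _; case: ifP => // /sub ->; exact: leqnn.
Qed.

Lemma Fmono (N0 N1 : {set T}) b b' w0 w1 (psi : T -> T) (d : T -> nat) :
  (forall u, u \in N0 -> b u <= \sum_(t in N1 | psi t == u) b' t + d u) ->
  w0 + \sum_(u in N0) d u <= w1 ->
  \sum_(u in N0) b u - \max_(u in N0) b u + w0 <=
  \sum_(t in N1) b' t - \max_(t in N1) b' t + w1.
Proof.
move=> hb hw.
case: (set_0Vmem N1) => [E1|[t0 h0]].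
  have -> : \sum_(t in N1) b' t = 0 by rewrite E1 big_set0.
  have : \sum_(u in N0) b u <= \sum_(u in N0) d u.
    apply: leq_sum => u hu; move: (hb u hu).
    by rewrite E1 big_pred0 // => y; rewrite inE.
  lia.
set ts := [arg max_(t > t0 in N1) b' t].
have hts : ts \in N1 by rewrite /ts; case: arg_maxnP.
have -> : \max_(t in N1) b' t = b' ts by apply: bigmax_eq_arg.
rewrite (big_setD1 ts hts) /= addKn.
set us := psi ts.
have step1 := sum_max_D1 N0 b us.
have step2 : \sum_(u in N0 :\ us) b u <=
   \sum_(u in N0 :\ us) \sum_(t in N1 | psi t == u) b' t + \sum_(u in N0) d u.
  apply: leq_trans (_ : \sum_(u in N0 :\ us) (\sum_(t in N1 | psi t == u) b' t + d u) <= _).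
    by apply: leq_sum => u; rewrite inE => /andP[_ hu]; apply: hb.
  rewrite big_split /= leq_add2l; apply: sum_sub; exact: subsetDl.
have step3 : \sum_(u in N0 :\ us) \sum_(t in N1 | psi t == u) b' t <=
    \sum_(t in N1 :\ ts) b' t.
  have P : \sum_(t | (t \in N1) && (psi t \in N0 :\ us)) b' t =
     \sum_(u in N0 :\ us) \sum_(t | ((t \in N1) && (psi t \in N0 :\ us)) && (psi t == u)) b' t.
    by apply: partition_big => t /andP[].
  have Q : \sum_(u in N0 :\ us) \sum_(t | ((t \in N1) && (psi t \in N0 :\ us)) && (psi t == u)) b' t
     = \sum_(u in N0 :\ us) \sum_(t in N1 | psi t == u) b' t.
    apply: eq_bigr => u hu; apply: eq_bigl => t.
    by case: eqP => [->|]; rewrite ?andbT ?andbF // hu andbT.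
  rewrite -Q -P big_mkcond [X in _ <= X]big_mkcond /=; apply: leq_sum => t _.
  case: ifP => // /andP[h1 h2]; rewrite !inE h1 andbT.
  by case: eqP => // E; move: h2; rewrite E !inE eqxx.
lia.
Qed.

Lemma F2 (N1 : {set T}) (b' : T -> nat) w1 a t1 t2 : t1 \in N1 -> t2 \in N1 -> t1 != t2 ->
  a <= b' t1 -> a <= b' t2 -> a <= w1 + \sum_(t in N1 :\ t1 :\ t2) b' t ->
  a + a <= \sum_(t in N1) b' t - \max_(t in N1) b' t + w1.
Proof.
move=> h1 h2 n12 a1 a2 a3.
set ts := [arg max_(t > t1 in N1) b' t].
have hts : ts \in N1 by rewrite /ts; case: arg_maxnP.
have -> : \max_(t in N1) b' t = b' ts by apply: bigmax_eq_arg.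
rewrite (big_setD1 ts hts) /= addKn.
have h2' : t2 \in N1 :\ t1 by rewrite !inE eq_sym n12.
have E : \sum_(t in N1 :\ t1) b' t = b' t2 + \sum_(t in N1 :\ t1 :\ t2) b' t.
  by rewrite (big_setD1 t2 h2').
case: (eqVneq ts t1) => [->|n1]; first lia.
case: (eqVneq ts t2) => [->|n2].
  have h1' : t1 \in N1 :\ t2 by rewrite !inE n12.
  rewrite (big_setD1 t1 h1') /=.
  rewrite (_ : N1 :\ t2 :\ t1 = N1 :\ t1 :\ t2); first lia.
  by apply/setP => y; rewrite !inE andbCA.
have h1' : t1 \in N1 :\ ts by rewrite !inE eq_sym n1.
rewrite (big_setD1 t1 h1') /=.
have h2'' : t2 \in N1 :\ ts :\ t1 by rewrite !inE eq_sym n12 eq_sym n2.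
rewrite (big_setD1 t2 h2'') /=; lia.
Qed.

End Arith.

Section Dash.
Variable R : realType.
Variable T : finType.
Implicit Types (s : state R T) (x y z u v : T).

Definition DInv s :=
  [/\ symmetric (E s), symmetric (H s), (forall a b, H s a b -> E s a b),
      irreflexive (H s) &
      (forall a b, Gp_rel s a b -> cid s a = cid s b) /\ LA (Gp_rel s)].

Lemma Gp_sym s : symmetric (H s) -> symmetric (Gp_rel s).
Proof. by move=> sH a b; rewrite /Gp_rel sH andbCA. Qed.

Lemma Gp_minusE s y : Gp_minus s y =2 rmv (Gp_rel s) y.
Proof.
move=> a b; rewrite /Gp_minus /rmv /Gp_rel !in_setD1.
by case: (a != y); case: (b != y); rewrite //= ?andbF.
Qed.

Lemma TcompE s u y : Tcomp s u y = [set z | connect (rmv (Gp_rel s) y) u z].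
Proof. by apply/setP => z; rewrite !inE (eq_connect (Gp_minusE s y)). Qed.

Lemma nbrGpE s v u : v \in alive s -> (u \in nbrGp s v) = Gp_rel s v u.
Proof. by move=> hv; rewrite /nbrGp /Gp_rel inE hv. Qed.

Lemma conn_neq (e : rel T) y u z : connect (rmv e y) u z -> u != y -> z != y.
Proof.
move=> c uy; case: (eqVneq u z) => [<-//|nuz].
by have [c' /and3P[]] := conn_last c nuz.
Qed.

Lemma sum_disj (I : {set T}) (F : T -> {set T}) (B : {set T}) (w : T -> nat) :
  (forall u, u \in I -> F u \subset B) ->
  (forall u u', u \in I -> u' \in I -> u != u' -> [disjoint F u & F u']) ->
  \sum_(u in I) \sum_(z in F u) w z <= \sum_(z in B) w z.
Proof.
move=> hs hd.
pose F' u := if u \in I then F u else set0.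
have dj : forall i j, i != j -> [disjoint F' i & F' j].
  move=> i j ij; rewrite /F' -setI_eq0; case: ifP => hi; last by rewrite set0I.
  by case: ifP => hj; [rewrite setI_eq0; apply: hd|rewrite setI0].
have -> : \sum_(u in I) \sum_(z in F u) w z = \sum_u \sum_(z in F' u) w z.
  rewrite big_mkcond /=; apply: eq_bigr => u _; rewrite /F'.
  by case: ifP => //; rewrite big_set0.
rewrite -(partition_disjoint_bigcup addn w dj); apply: sum_sub.
apply/bigcupsP => u _; rewrite /F'; case: ifP => h; [exact: hs|exact: sub0set].
Qed.

Lemma rem_le_side s y x : DInv s -> y \in alive s -> y != x ->
  rem_dash s y <= Wt s (Tcomp s y x).
Proof.
move=> [sE sH HE iH [cH la]] hy yx.
set N := nbrGp s y.
pose b u := Wt s (Tcomp s u y).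
have nbr u : u \in N -> Gp_rel s y u by rewrite /N nbrGpE.
have uy u : u \in N -> u != y.
  by move/nbr; rewrite /Gp_rel => /and3P[_ _ h]; apply: contraTneq h => ->; rewrite iH.
have disj u1 u2 z : u1 \in N -> u2 \in N -> u1 != u2 ->
    z \in Tcomp s u1 y -> z \in Tcomp s u2 y -> False.
  move=> h1 h2 n12; rewrite !TcompE !inE => c1 c2.
  move/negP: (la _ _ _ (nbr _ h1) (nbr _ h2) n12); apply.
  apply: connect_trans c1 _; rewrite csym //; exact: rmv_sym (Gp_sym sH).
pose u0 := odflt x [pick u in N | x \in Tcomp s u y].
have hu0 : forall u, u \in N -> u != u0 -> x \notin Tcomp s u y.
  move=> u hu nu; move: nu; rewrite /u0; case: pickP => [u1 /andP[h1 x1]|nx] /= nu.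
    by apply/negP => x2; apply: (disj u u1 x) => //; rewrite eq_sym.
  by move: (nx u); rewrite hu /= => ->.
rewrite /rem_dash -/N; apply: leq_trans (_ : \sum_(u in N :\ u0) b u + w s y <= _).
  by rewrite leq_add2r; apply: sum_max_D1.
have yT : y \in Tcomp s y x by rewrite TcompE inE connect0.
rewrite /Wt (big_setD1 y yT) addnC leq_add2l.
apply: sum_disj.
  move=> u; rewrite in_setD1 => /andP[nu hu]; apply/subsetP => z.
  have xu := hu0 _ hu nu.
  rewrite !TcompE !inE => c; rewrite (conn_neq c (uy _ hu)) /=.
  have yxu : rmv (Gp_rel s) x y u.
    rewrite /rmv yx (nbr _ hu) andbT.
    by apply: contraNneq xu => <-; rewrite TcompE inE connect0.
  apply: connect_trans (connect1 yxu) _.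
  have := conn_restrict c (P := fun z => z \in Tcomp s u y) _.
  move/(_ _)/connect_mono; apply; last first.
    by move=> z'; rewrite TcompE inE.
  move=> p q /= /and3P[hp hq /and3P[_ _ e]]; rewrite /rmv e andbT.
  by apply/andP; split; [apply: contraNneq xu => <-|apply: contraNneq xu => <-].
move=> u u'; rewrite !in_setD1 => /andP[_ hu] /andP[_ hu'] n.
rewrite -setI_eq0; apply/eqP/setP => z; rewrite inE [_ \in set0]inE.
by apply/negP => /andP[z1 z2]; apply: (disj u u' z).
Qed.

End Dash.

Lemma cover_sum (T : finType) (A I : {set T}) (F : T -> {set T}) (w : T -> nat) :
  (forall z, z \in A -> exists2 t, t \in I & z \in F t) ->
  \sum_(z in A) w z <= \sum_(t in I) \sum_(z in F t) w z.
Proof.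
move=> hc.
have -> : \sum_(t in I) \sum_(z in F t) w z =
   \sum_z \sum_(t in I) (if z \in F t then w z else 0).
  rewrite exchange_big /= ; apply: eq_bigr => t _.
  by rewrite big_mkcond /=.
rewrite big_mkcond /=; apply: leq_sum => z _; case: ifP => // /hc [t ht hz].
by rewrite (bigD1 t) //= hz leq_addr.
Qed.

Lemma LA_rmv (T : finType) (e : rel T) x : LA e -> LA (rmv e x).
Proof.
move=> la v u1 u2 /and3P[_ _ e1] /and3P[_ _ e2] n12; apply/negP => c.
move/negP: (la _ _ _ e1 e2 n12); apply.
apply: connect_mono c => p q /and3P[pv qv /and3P[_ _ pq]]; by rewrite /rmv pv qv.
Qed.

Lemma pick_le (T : finType) (A : {set T}) (P : pred T) (F : T -> nat) u :
  u \in A -> P u -> F u <= \sum_(t in A | P t) F t.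
Proof. by move=> hu pu; rewrite (bigD1 u) /= ?hu ?pu // leq_addr. Qed.

Lemma sum_subP (T : finType) (A : {set T}) (P : pred T) (F : T -> nat) :
  (forall t, t \in A -> P t) -> \sum_(t in A) F t <= \sum_(t | P t) F t.
Proof.
move=> h; rewrite big_mkcond [X in _ <= X]big_mkcond /=; apply: leq_sum => t _.
by case: ifP => // /h ->.
Qed.

Section Step.
Variable R : realType.
Variable T : finType.
Variables (G0 : rel T) (id0 : T -> R) (s s' : state R T) (x : T).
Variables (U : {set T}) (l : seq T) (r : T) (m : R).
Hypothesis inv : DInv s.
Hypothesis hx : x \in alive s.
Let S := U :|: nbrGp s x.
Hypothesis hU : UN_spec id0 s x U.
Hypothesis ul : uniq l.
Hypothesis lS : [set y in l] = S.
Hypothesis sl : sorted (fun a b => (delta G0 s a <= delta G0 s b)%R) l.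
Hypothesis hr : nbrGp s x != set0 -> r \in nbrGp s x.
Hypothesis al' : alive s' = alive s :\ x.
Hypothesis E' : E s' = (fun a b => E s a b || tree_edge l a b).
Hypothesis H' : H s' = (fun a b => H s a b || tree_edge l a b).
Hypothesis cid' : cid s' = (fun z => if [exists y in S, connect (Gp_rel s') y z]
                           then m else cid s z).
Hypothesis w' : w s' = (if nbrGp s x == set0 then w s
                else fun z => (w s z + (z == r) * w s x)%N).

Let sE : symmetric (E s). Proof. by case: inv. Qed.
Let sH : symmetric (H s). Proof. by case: inv. Qed.
Let HE : forall a b, H s a b -> E s a b. Proof. by case: inv. Qed.
Let iH : irreflexive (H s). Proof. by case: inv. Qed.
Let cH : forall a b, Gp_rel s a b -> cid s a = cid s b. Proof. by case: inv => _ _ _ _ []. Qed.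
Let la : LA (Gp_rel s). Proof. by case: inv => _ _ _ _ []. Qed.
Let sG : symmetric (Gp_rel s). Proof. exact: Gp_sym. Qed.

Let G1 := rmv (Gp_rel s) x.

Lemma cid_conn a b : connect (Gp_rel s) a b -> cid s a = cid s b.
Proof.
move: b; apply: connect_ind' => // c d _ /cH -> //.
Qed.

Lemma memS y : (y \in l) = (y \in S).
Proof. by rewrite -lS inE. Qed.

Lemma U_prop y : y \in U -> [/\ y \in nbrG s x, cid s y != cid s x & y \in alive s].
Proof.
case: hU => /subsetP sub _ _ _ /sub; rewrite inE => /andP[hn hc].
by split=> //; move: hn; rewrite inE => /andP[].
Qed.

Lemma Nx_prop y : y \in nbrGp s x -> Gp_rel s x y.
Proof. by rewrite nbrGpE. Qed.

Lemma Nx_cid y : y \in nbrGp s x -> cid s y = cid s x.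
Proof. by move/Nx_prop/cH. Qed.

Lemma S_alive y : y \in S -> y \in alive s :\ x.
Proof.
rewrite inE => /orP[/U_prop[_ c a]|/Nx_prop/and3P[_ a h]]; rewrite in_setD1 a andbT.
  by apply: contraNneq c => ->.
by apply: contraTneq h => ->; rewrite iH.
Qed.

Lemma dist a b : a \in S -> b \in S -> a != b -> ~~ connect G1 a b.
Proof.
have cc : forall a b, connect G1 a b -> cid s a = cid s b.
  by move=> p q /conn_rmv /cid_conn.
move=> ha hb nab; apply/negP => c.
move: ha hb; rewrite /S !in_setU => /orP[ha|ha] /orP[hb|hb].
- case: hU => _ _ uniqU _; by move/eqP: nab; apply; apply: uniqU => //; apply: cc.
- by have [_ + _] := U_prop ha; rewrite (cc _ _ c) (Nx_cid hb) eqxx.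
- by have [_ + _] := U_prop hb; rewrite -(cc _ _ c) (Nx_cid ha) eqxx.
- by move/negP: (la (Nx_prop ha) (Nx_prop hb) nab); apply.
Qed.

Local Notation L i := (nth x l i).

Lemma te_in a b : tree_edge l a b -> a \in l /\ b \in l.
Proof.
rewrite (tree_edgeE x) => /teN_mem[i [[/andP[i1 ik] /eqP -> /eqP ->]|[/andP[i1 ik] /eqP -> /eqP ->]]];
have ik' : i < size l by move: ik i1; clear; lia.
all: have pk : par i < size l by apply: ltn_trans (par_lt i1) ik'.
all: by rewrite !mem_nth.
Qed.

Lemma te_sym : symmetric (tree_edge l).
Proof. by move=> a b; rewrite !(tree_edgeE x) teN_sym. Qed.

Lemma te_irr a : tree_edge l a a = false.
Proof.
apply/negP; rewrite (tree_edgeE x) => /teN_mem[i [[/andP[i1 ik] /eqP e1 /eqP e2]|[/andP[i1 ik] /eqP e1 /eqP e2]]];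
have ik' : i < size l by move: ik i1; clear; lia.
all: have pk : par i < size l by apply: ltn_trans (par_lt i1) ik'.
all: have := par_lt i1; rewrite ltn_neqAle => /andP[+ _].
all: by rewrite -(nth_uniq x pk ik' ul) -e1 -e2 eqxx.
Qed.

Lemma te_alive a b : tree_edge l a b -> (a \in alive s :\ x) && (b \in alive s :\ x).
Proof. by move/te_in => [ha hb]; rewrite !S_alive // -memS. Qed.

Lemma GpE' : Gp_rel s' =2 UE x l G1 (size l).-1.
Proof.
move=> a b; rewrite /Gp_rel /UE /G1 /rmv al' H' -(tree_edgeE x).
case te: (tree_edge l a b); first by move/te_alive: te => /andP[-> ->]; rewrite !orbT.
by rewrite !orbF /Gp_rel !in_setD1; case: (a != x); case: (b != x); rewrite /= ?andbF.
Qed.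

Lemma LA_ext (e e' : rel T) : e =2 e' -> LA e -> LA e'.
Proof.
move=> ee la' v u1 u2; rewrite -!ee => h1 h2 n12.
rewrite -(eq_connect (_ : rmv e v =2 rmv e' v)) ?la' // => p q; by rewrite /rmv ee.
Qed.

Lemma DInv' : DInv s'.
Proof.
split.
- by move=> a b; rewrite E' sE te_sym.
- by move=> a b; rewrite H' sH te_sym.
- by move=> a b; rewrite H' E' => /orP[/HE ->|->]; rewrite ?orbT.
- by move=> a; rewrite H' iH te_irr.
split.
  move=> a b hab; rewrite cid'.
  have sG' : symmetric (Gp_rel s') by apply: Gp_sym => p q; rewrite H' sH te_sym.
  have -> : [exists y in S, connect (Gp_rel s') y b] = [exists y in S, connect (Gp_rel s') y a].
    apply/existsP/existsP => [[y /andP[hy c]]|[y /andP[hy c]]]; exists y; rewrite hy /=.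
      by apply: connect_trans c (connect1 _); rewrite sG'.
    exact: connect_trans c (connect1 hab).
  case: ifP => // /existsP nex.
  move: hab; rewrite GpE' /UE -(tree_edgeE x) => /orP[/and3P[_ _ /cH //]|/te_in[ha _]].
  by case: nex; exists a; rewrite -memS ha connect0.
apply: (LA_ext (fun a b => esym (GpE' a b))).
case: (posnP (size l)) => [l0|lpos].
  apply: (LA_ext (e := G1)); first by move=> a b; rewrite /UE l0 orbF.
  exact: LA_rmv.
apply: UE_LA.
- exact: rmv_sym.
- move=> i j ik jk ij; apply: dist; rewrite -?memS ?mem_nth //.
  by rewrite nth_uniq.
- exact: LA_rmv.
- by rewrite prednK // ltnSn.
Qed.

Let te := tree_edge l.
Let G2 := Gp_rel s'.

Lemma G2E a b : G2 a b = G1 a b || te a b.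
Proof. by rewrite /G2 GpE' /UE -(tree_edgeE x). Qed.

Lemma w_mono z : w s z <= w s' z.
Proof. by rewrite w'; case: ifP => // _; rewrite leq_addr. Qed.

Lemma Wt_mono A : Wt s A <= Wt s' A.
Proof. by apply: leq_sum => z _; apply: w_mono. Qed.

Lemma w_r : nbrGp s x != set0 -> w s' r = w s r + w s x.
Proof. by move=> ne; rewrite w' (negbTE ne) eqxx mul1n. Qed.

Lemma g1_lift v p q : p != v -> q != v -> G1 p q -> rmv G2 v p q.
Proof. by move=> pv qv e; rewrite /rmv pv qv G2E e. Qed.

Lemma te_lift v p q : p != v -> q != v -> te p q -> rmv G2 v p q.
Proof. by move=> pv qv e; rewrite /rmv pv qv G2E e orbT. Qed.

Lemma Tpres v u : u \in nbrGp s v -> x \notin Tcomp s u v ->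
  Tcomp s u v \subset Tcomp s' u v.
Proof.
move=> hu xT; apply/subsetP => z; rewrite !TcompE !inE => c.
have := conn_restrict c (P := fun z => z \in Tcomp s u v) _.
move/(_ _)/connect_mono; apply; last by move=> z'; rewrite TcompE inE.
move=> p q /= /and3P[hp hq /and3P[pv qv e]]; apply: g1_lift => //.
by rewrite /G1 /rmv e andbT; apply/andP; split; apply: contraNneq xT => <-.
Qed.

Lemma Nx_S y : y \in nbrGp s x -> y \in S.
Proof. by rewrite /S in_setU => ->; rewrite orbT. Qed.

Lemma lift_tree v a b : v \notin S -> a \in S -> b \in S -> connect (rmv G2 v) a b.
Proof.
move=> vS ha hb; have := tree_conn x (_ : a \in l) (_ : b \in l); rewrite ?memS //.
move/(_ _ _)/connect_mono; apply=> // p q e; rewrite -(tree_edgeE x) in e.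
have [pl ql] := te_in e; apply: te_lift => //.
  by apply: contraNneq vS => <-; rewrite -memS.
by apply: contraNneq vS => <-; rewrite -memS.
Qed.

Lemma Tcross v u : v \in alive s -> v \notin S -> u \in nbrGp s v ->
  x \in Tcomp s u v ->
  (forall z, z \in Tcomp s u v -> z != x -> z \in Tcomp s' u v) /\
  (forall y, y \in S -> y \in Tcomp s' u v).
Proof.
move=> hv vS hu; rewrite TcompE inE => cx.
have ux : u != x.
  apply: contraNneq vS => E; move: hu; rewrite E => hu; apply: Nx_S.
  by rewrite nbrGpE // sG -nbrGpE.
pose P z := (z != x -> connect (rmv G2 v) u z) /\
            (z = x -> forall y, y \in S -> connect (rmv G2 v) u y).
have key : forall z, connect (rmv (Gp_rel s) v) u z -> P z.
  apply: connect_ind'.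
    by split=> [_|E]; [exact: connect0|by move: ux; rewrite E eqxx].
  move=> c d _ /and3P[cv dv e] [Pc1 Pc2]; split=> [dx|dx].
    case: (eqVneq c x) => [cx'|cx'].
      by apply: Pc2 => //; apply: Nx_S; rewrite nbrGpE // -cx'.
    by apply: connect_trans (Pc1 cx') (connect1 _); apply: g1_lift => //; rewrite /G1 /rmv cx' dx e.
  have cx' : c != x by apply: contraTneq e => ->; rewrite dx /Gp_rel iH !andbF.
  move=> y hy; apply: connect_trans (Pc1 cx') (lift_tree vS _ hy).
  by apply: Nx_S; rewrite nbrGpE // sG -dx.
split.
  by move=> z; rewrite TcompE !inE => /key[+ _] zx => /(_ zx).
by move=> y hy; rewrite TcompE inE; have [_ ] := key _ cx; apply.
Qed.

Lemma TNv v y : v \in S -> y \in S -> y != v ->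
  exists t, te v t /\ connect (rmv G2 v) t y.
Proof.
move=> vS yS yv.
have vl : v \in l by rewrite memS.
have yl : y \in l by rewrite memS.
set iv := index v l.
have ivk : iv < size l by rewrite index_mem.
have ev : nth x l iv = v by apply: nth_index.
set j := index y l.
have jk : j < size l by rewrite index_mem.
have ey : nth x l j = y by apply: nth_index.
have jiv : j != iv by apply: contra_neq yv; rewrite -ey -ev => ->.
have [t [ht ct]] := TN x ul ivk jk jiv.
exists t; split; first by rewrite /te (tree_edgeE x) -ev.
rewrite -ey; apply: connect_mono ct => p q; rewrite ev => /and3P[pv qv e].
by apply: te_lift => //; rewrite /te (tree_edgeE x).
Qed.

Lemma Tx v : v \in alive s -> v \in S -> x \in nbrGp s v ->
  forall z, z \in Tcomp s x v -> z != x -> exists t, te v t /\ z \in Tcomp s' t v.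
Proof.
move=> hv vS hxv z; rewrite TcompE inE.
pose P z := z != x -> exists t, te v t /\ connect (rmv G2 v) t z.
suff key : forall z, connect (rmv (Gp_rel s) v) x z -> P z.
  by move=> c zx; have [t [ht ct]] := key z c zx; exists t; rewrite TcompE inE.
apply: (connect_ind' (P := P)); first by rewrite /P eqxx.
- move=> c d _ /and3P[cv dv e] Pc dx.
  case: (eqVneq c x) => [cx|cx].
    have dS : d \in S by apply: Nx_S; rewrite nbrGpE // -cx.
    exact: TNv vS dS dv.
  have [t [ht ct]] := Pc cx; exists t; split=> //.
  by apply: connect_trans ct (connect1 _); apply: g1_lift => //; rewrite /G1 /rmv cx dx e.
Qed.

Lemma Tside v y t : v \in S -> y \in S -> y != v -> connect (rmv G2 v) t y ->
  Tcomp s y x \subset Tcomp s' t v.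
Proof.
move=> vS yS yv ct; apply/subsetP => z; rewrite !TcompE !inE => c.
apply: connect_trans ct _.
have := conn_restrict c (P := fun z => z != v) _.
move/(_ _)/connect_mono; apply.
  by move=> p q /= /and3P[pv qv e]; apply: g1_lift.
move=> z' c'; apply: contraTneq c' => ->; exact: dist.
Qed.

Lemma v_alive v : v \in alive s' -> v \in alive s /\ v != x.
Proof. by rewrite al' in_setD1 => /andP[]. Qed.

Lemma card_notS v : v \in alive s' -> v \notin S -> #|nbrG s' v| <= #|nbrG s v|.
Proof.
move=> hv' vS; apply: subset_leq_card; apply/subsetP => z; rewrite !inE al' E' in_setD1.
case/andP=> /andP[_ ->] /orP[->//|/te_in[vl _]].
by move: vS; rewrite -memS vl.
Qed.

Lemma x_nbrG v : v \in S -> x \in nbrG s v.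
Proof.
rewrite /nbrG inE hx /= sE /S in_setU => /orP[/U_prop[+ _ _]|/Nx_prop/and3P[_ _ /HE //]].
by rewrite inE => /andP[].
Qed.

Lemma card_S v : v \in alive s' -> v \in S ->
  #|nbrG s' v| + 1 <= #|nbrG s v| + #|[set t | te v t]|.
Proof.
move=> hv' vS.
have sub : nbrG s' v \subset (nbrG s v :\ x) :|: [set t | te v t].
  apply/subsetP => z; rewrite !inE al' E' in_setD1 => /andP[/andP[zx za] /orP[e|e]].
    by rewrite zx za e.
  by rewrite /te e orbT.
have := subset_leq_card sub.
have := leq_card_setU (nbrG s v :\ x) [set t | te v t].
have := cardsD1 x (nbrG s v); rewrite x_nbrG //.
move=> /= h1 h2 h3; move: h2 => /leqifP; case: ifP => _ h2; lia.
Qed.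

Lemma N0_notS v u : v \in alive s' -> v \in S -> u \in nbrGp s v -> u \notin S.
Proof.
move=> hv' vS hu; have [hv vx] := v_alive hv'.
apply/negP => uS; have [ux ua] : u != x /\ u \in alive s.
  by move: (S_alive uS); rewrite in_setD1 => /andP[].
have uv : u != v by apply: contraTneq hu => ->; rewrite nbrGpE // /Gp_rel iH !andbF.
have vu : v != u by rewrite eq_sym.
move/negP: (dist vS uS vu); apply.
by apply: connect1; rewrite /G1 /rmv vx ux -nbrGpE.
Qed.

Lemma xT v u : v \in alive s' -> v \in S -> u \in nbrGp s v -> u != x ->
  x \notin Tcomp s u v.
Proof.
move=> hv' vS hu ux; have [hv vx] := v_alive hv'.
rewrite TcompE inE; apply/negP => c.
case: (boolP (x \in nbrGp s v)) => hxv.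
  have g1 : Gp_rel s v u by rewrite -nbrGpE.
  have g2 : Gp_rel s v x by rewrite -nbrGpE.
  by move: (la g1 g2 ux); rewrite c.
have vU : v \in U.
  move: vS; rewrite /S in_setU => /orP[//|h]; move: hxv; rewrite nbrGpE // sG -nbrGpE //.
  by rewrite h.
have [_ + _] := U_prop vU.
have -> : cid s v = cid s u by apply: cH; rewrite -nbrGpE.
by rewrite (cid_conn (conn_rmv c)) eqxx.
Qed.

Lemma N1E v : v \in alive s' ->
  nbrGp s' v = (nbrGp s v :\ x) :|: [set t | te v t].
Proof.
move=> hv'; have [hv vx] := v_alive hv'.
apply/setP => z; rewrite !inE al' H' in_setD1.
rewrite /te; case e: (tree_edge l v z); last by rewrite !orbF andbA.
by rewrite orbT andbT; move/te_alive: e => /andP[_]; rewrite in_setD1 orbT => ->.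
Qed.

Lemma Wt_split (A : {set T}) y : y \in A -> Wt s A = w s y + \sum_(z in A :\ y) w s z.
Proof. by move=> h; rewrite /Wt (big_setD1 y h). Qed.

Lemma cross_w (A : {set T}) : x \in A -> nbrGp s x != set0 -> r \in A ->
  Wt s A <= \sum_(z in A :\ x) w s' z.
Proof.
move=> hxA ne hrA.
have rx : r != x by have := S_alive (Nx_S (hr ne)); rewrite in_setD1 => /andP[].
have hr' : r \in A :\ x by rewrite in_setD1 rx.
rewrite (Wt_split hxA) (big_setD1 r hr') (big_setD1 r hr') /= (w_r ne).
have : \sum_(z in A :\ x :\ r) w s z <= \sum_(z in A :\ x :\ r) w s' z.
  by apply: leq_sum => z _; apply: w_mono.
lia.
Qed.

Lemma b_notS v u : v \in alive s' -> v \notin S -> u \in nbrGp s v ->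
  Wt s (Tcomp s u v) <= Wt s' (Tcomp s' u v).
Proof.
move=> hv' vS hu; have [hv vx] := v_alive hv'.
case: (boolP (x \in Tcomp s u v)) => xin; last first.
  apply: leq_trans (Wt_mono _) _; apply: sum_sub; exact: Tpres.
have [H1 H2] := Tcross hv vS hu xin.
have ux : u != x.
  apply: contraNneq vS => E; move: hu; rewrite E => hu; apply: Nx_S.
  by rewrite nbrGpE // sG -nbrGpE.
have cux : connect (rmv (Gp_rel s) v) u x by move: xin; rewrite TcompE inE.
have [c /and3P[_ _ ecx]] := conn_last cux ux.
have ne : nbrGp s x != set0.
  by apply/set0Pn; exists c; rewrite nbrGpE // sG.
have rN := hr ne.
have rT : r \in Tcomp s u v.
  rewrite TcompE inE; apply: connect_trans cux (connect1 _).
  rewrite /rmv (eq_sym x v) vx -nbrGpE // rN andbT; apply: contraNneq vS => <-; exact: Nx_S.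
apply: leq_trans (cross_w xin ne rT) _; apply: sum_sub; apply/subsetP => z.
by rewrite in_setD1 => /andP[zx zT]; apply: H1.
Qed.

Lemma rem_notS v : v \in alive s' -> v \notin S -> rem_dash s v <= rem_dash s' v.
Proof.
move=> hv' vS; have [hv vx] := v_alive hv'.
have xN : x \notin nbrGp s v.
  apply: contraNN vS => h; apply: Nx_S; by rewrite nbrGpE // sG -nbrGpE.
have N1e : nbrGp s' v = nbrGp s v.
  rewrite N1E //; apply/setP => z; rewrite !inE /te.
  case e: (tree_edge l v z).
    by have [vl _] := te_in e; move: vS; rewrite -memS vl.
  rewrite orbF; case: eqP => // ->; move: xN; rewrite /nbrGp inE => /negbTE ->. by [].
rewrite /rem_dash N1e.
apply: (Fmono (psi := id) (d := fun _ => 0)).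
  move=> u hu; rewrite addn0; apply: leq_trans (b_notS hv' vS hu) _.
  exact: (pick_le (P := fun t => t == u)).
by rewrite big1 // addn0 w_mono.
Qed.

Lemma b_keep v u : v \in alive s' -> v \in S -> u \in nbrGp s v -> u != x ->
  Wt s (Tcomp s u v) <= Wt s' (Tcomp s' u v).
Proof.
move=> hv' vS hu ux; apply: leq_trans (Wt_mono _) _; apply: sum_sub.
by apply: Tpres => //; apply: xT.
Qed.

Lemma b_x v : v \in alive s' -> v \in S -> x \in nbrGp s v ->
  Wt s (Tcomp s x v) <= \sum_(t in [set t | te v t]) Wt s' (Tcomp s' t v) + (r == v) * w s x.
Proof.
move=> hv' vS hxv; have [hv vx] := v_alive hv'.
have ne : nbrGp s x != set0.
  by apply/set0Pn; exists v; move: hxv; rewrite !nbrGpE // sG.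
have cov : \sum_(z in Tcomp s x v :\ x) w s' z <=
    \sum_(t in [set t | te v t]) Wt s' (Tcomp s' t v).
  apply: cover_sum => z; rewrite in_setD1 => /andP[zx zT].
  by have [t [ht zt]] := Tx hv vS hxv zT zx; exists t => //; rewrite inE.
have xA : x \in Tcomp s x v by rewrite TcompE inE connect0.
case: (eqVneq r v) => [rv|rv].
  rewrite (Wt_split xA) mul1n addnC leq_add2r; apply: leq_trans cov.
  by apply: leq_sum => z _; apply: w_mono.
rewrite mul0n addn0; apply: leq_trans cov; apply: cross_w => //.
rewrite TcompE inE; apply: connect1; rewrite /rmv (eq_sym x v) vx rv -nbrGpE //.
exact: hr.
Qed.

Lemma rem_S v : v \in alive s' -> v \in S -> rem_dash s v <= rem_dash s' v.
Proof.
move=> hv' vS; have [hv vx] := v_alive hv'.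
set N0 := nbrGp s v.
have teS : forall t, te v t -> t \in S by move=> t /te_in[_]; rewrite memS.
rewrite /rem_dash.
apply: (Fmono (psi := fun t => if t \in N0 then t else x)
              (d := fun u => if u == x then (r == v) * w s x else 0)).
  move=> u hu; case: (eqVneq u x) => [E|ux].
    subst u; have hxv := hu.
    apply: leq_trans (b_x hv' vS hxv) _; rewrite leq_add2r.
    apply: sum_subP => t; rewrite inE => ht.
    have tN0 : t \notin N0 by apply/negP => /(N0_notS hv' vS); rewrite teS.
    by rewrite N1E // in_setU inE ht orbT (negbTE tN0) eqxx.
  rewrite addn0; apply: leq_trans (b_keep hv' vS hu ux) _.
  apply: (pick_le (P := fun t => (if t \in N0 then t else x) == u)); last by rewrite hu.
  by rewrite N1E // in_setU in_setD1 ux hu.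
case: (boolP (x \in N0)) => hxv.
  rewrite (big_setD1 x hxv) /= eqxx big1 ?addn0; last first.
    by move=> u; rewrite in_setD1 => /andP[/negbTE -> _].
  have ne : nbrGp s x != set0.
    by apply/set0Pn; exists v; move: hxv; rewrite /N0 !nbrGpE // sG.
  by rewrite w' (negbTE ne) eq_sym.
rewrite big1 ?addn0 ?w_mono // => u hu; case: eqP => // E.
by move: hxv; rewrite -E hu.
Qed.

Lemma rem_S_big v : v \in alive s' -> v \in S ->
  (index v l).*2.+2 < size l \/ (0 < index v l /\ (index v l).*2.+1 < size l) ->
  exists y1 y2, [/\ y1 \in alive s, y2 \in alive s,
     (delta G0 s v <= delta G0 s y1)%R, (delta G0 s v <= delta G0 s y2)%R &
     2 * minn (minn (rem_dash s y1) (rem_dash s y2)) (rem_dash s v) <= rem_dash s' v].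
Proof.
move=> hv' vS cond; have [hv vx] := v_alive hv'.
have vl : v \in l by rewrite memS.
set iv := index v l in cond.
have ivk : iv < size l by rewrite index_mem.
have ev : nth x l iv = v by apply: nth_index.
have [t1 [t2 [j1 [j2 [[n12 h1 h2 c1 c2] [ij1 j1k ij2 j2k]]]]]] := TN2 x ul ivk cond.
rewrite ev in h1 h2 c1 c2.
have lift : forall a b, connect (rmv (teN x l (size l).-1) v) a b -> connect (rmv G2 v) a b.
  move=> a b; apply: connect_mono => p q /and3P[pv qv e].
  by apply: te_lift => //; rewrite /te (tree_edgeE x).
have teS : forall t, te v t -> t \in S by move=> t /te_in[_]; rewrite memS.
have tE : forall t, teN x l (size l).-1 v t -> te v t by move=> t; rewrite /te (tree_edgeE x).
have yS : forall j, j < size l -> nth x l j \in S by move=> j jk; rewrite -memS mem_nth.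
have yv : forall j, j < size l -> iv < j -> nth x l j != v.
  by move=> j jk ij; rewrite -ev nth_uniq // neq_ltn ij orbT.
have ya : forall j, j < size l -> (nth x l j \in alive s) /\ (nth x l j != x).
  by move=> j jk; have := S_alive (yS j jk); rewrite in_setD1 => /andP[].
have bnd : forall j t, j < size l -> iv < j -> connect (rmv G2 v) t (nth x l j) ->
    rem_dash s (nth x l j) <= Wt s' (Tcomp s' t v).
  move=> j t jk ij ct; have [ya1 ya2] := ya j jk.
  apply: leq_trans (rem_le_side inv ya1 ya2) _.
  apply: leq_trans (Wt_mono _) _; apply: sum_sub.
  exact: Tside vS (yS j jk) (yv j jk ij) ct.
have tr : transitive (fun a b => (delta G0 s a <= delta G0 s b)%R).
  by move=> p q r'; apply: le_trans.
have rf : reflexive (fun a b => (delta G0 s a <= delta G0 s b)%R) by move=> p; exact: lexx.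
have dl : forall j, j < size l -> iv < j -> (delta G0 s v <= delta G0 s (nth x l j))%R.
  move=> j jk ij; rewrite -{1}ev.
  by apply: (sorted_leq_nth tr rf x sl) => //; apply: ltnW.
exists (nth x l j1), (nth x l j2); split.
- by have [] := ya j1 j1k.
- by have [] := ya j2 j2k.
- exact: dl.
- exact: dl.
set N0 := nbrGp s v.
set a := minn (minn (rem_dash s (nth x l j1)) (rem_dash s (nth x l j2))) (rem_dash s v).
have b1 := bnd j1 t1 j1k ij1 (lift _ _ c1).
have b2 := bnd j2 t2 j2k ij2 (lift _ _ c2).
have inN1 : forall t, te v t -> t \in nbrGp s' v.
  by move=> t ht; rewrite N1E // in_setU inE ht orbT.
have a3 : a <= w s' v + \sum_(t in nbrGp s' v :\ t1 :\ t2) Wt s' (Tcomp s' t v).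
  have r1 := sum_max_D1 N0 (fun u => Wt s (Tcomp s u v)) x.
  have r2 : \sum_(u in N0 :\ x) Wt s (Tcomp s u v) <= \sum_(u in N0 :\ x) Wt s' (Tcomp s' u v).
    apply: leq_sum => u; rewrite in_setD1 => /andP[ux hu]; exact: b_keep.
  have r3 : \sum_(u in N0 :\ x) Wt s' (Tcomp s' u v) <=
            \sum_(t in nbrGp s' v :\ t1 :\ t2) Wt s' (Tcomp s' t v).
    apply: sum_sub; apply/subsetP => u; rewrite in_setD1 => /andP[ux hu].
    have uS := N0_notS hv' vS hu.
    rewrite !in_setD1 N1E // in_setU in_setD1 ux hu andbT.
    rewrite andbT; apply/andP; split; apply: contraNneq uS => ->; apply: teS => //; exact: tE.
  have r4 := w_mono v.
  apply: leq_trans (geq_minr _ _) _; rewrite /rem_dash -/N0 addnC.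
  apply: leq_add => //; apply: leq_trans r1 (leq_trans r2 r3).
have a1 : a <= Wt s' (Tcomp s' t1 v).
  by apply: leq_trans b1; apply: leq_trans (geq_minl _ _) (geq_minl _ _).
have a2 : a <= Wt s' (Tcomp s' t2 v).
  by apply: leq_trans b2; apply: leq_trans (geq_minl _ _) (geq_minr _ _).
rewrite mul2n -addnn; exact: F2 (inN1 _ (tE _ h1)) (inN1 _ (tE _ h2)) n12 a1 a2 a3.
Qed.

Lemma step_cases v : v \in alive s' ->
  ((delta G0 s' v <= delta G0 s v)%R /\ rem_dash s v <= rem_dash s' v) \/
  exists y1 y2, [/\ y1 \in alive s, y2 \in alive s,
     (delta G0 s v <= delta G0 s y1)%R, (delta G0 s v <= delta G0 s y2)%R &
     (delta G0 s' v <= delta G0 s v + 2)%R /\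
     2 * minn (minn (rem_dash s y1) (rem_dash s y2)) (rem_dash s v) <= rem_dash s' v].
Proof.
move=> hv'; have [hv vx] := v_alive hv'.
case: (boolP (v \in S)) => vS; last first.
  left; split; last exact: rem_notS.
  by rewrite /delta lerD2r lez_nat; apply: card_notS.
have vl : v \in l by rewrite memS.
have ivk : index v l < size l by rewrite index_mem.
have ev : nth x l (index v l) = v by apply: nth_index.
have cS := card_S hv' vS.
have TNe : [set t | te v t] = [set t | teN x l (size l).-1 (nth x l (index v l)) t].
  by apply/setP => t; rewrite !inE ev /te (tree_edgeE x).
have c3 := TN_card x ul ivk; rewrite -TNe in c3.
case: (boolP (((index v l).*2.+2 < size l) || ((0 < index v l) && ((index v l).*2.+1 < size l)))) => cb.
  have cond : (index v l).*2.+2 < size l \/ (0 < index v l /\ (index v l).*2.+1 < size l).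
    by case/orP: cb => [->|/andP[-> ->]]; [left|right].
  have [y1 [y2 [a1 a2 d1 d2 rr]]] := rem_S_big hv' vS cond.
  right; exists y1, y2; split => //; split => //.
  have h : #|nbrG s' v| <= #|nbrG s v| + 2.
    by rewrite -(leq_add2r 1) (leq_trans cS) // -addnA leq_add2l.
  by rewrite /delta addrAC lerD2r -PoszD lez_nat.
have cond : ~ ((index v l).*2.+2 < size l \/ (0 < index v l /\ (index v l).*2.+1 < size l)).
  by case=> [h|[h1 h2]]; move/negP: cb; apply; rewrite ?h ?h1 ?h2 ?orbT.
have c1 := TN_card1 x ul ivk cond; rewrite -TNe in c1.
left; split; last exact: rem_S.
have h : #|nbrG s' v| <= #|nbrG s v|.
  by rewrite -(leq_add2r 1) (leq_trans cS) // leq_add2l.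
by rewrite /delta lerD2r lez_nat.
Qed.

End Step.

From mathcomp Require Import all_boot all_order all_algebra.
From mathcomp Require Import all_classical all_reals all_analysis.
Import Order.TTheory GRing.Theory Num.Theory.

Section Fin.
Variable R : realType.
Local Open Scope ring_scope.

Definition f (d : int) : R := powR (2 : R) (d%:~R / 2).

Lemma f_mono (a b : int) : (a <= b)%R -> f a <= f b.
Proof.
move=> ab; apply: ler_powR; first by rewrite ler1n.
by rewrite ler_pM2r ?invr_gt0 ?ltr0n // ler_int.
Qed.

Lemma f_2 (a : int) : f (a + 2) = 2 * f a.
Proof.
rewrite /f intrD mulrDl (_ : (2%:~R : R) / 2 = 1); last by rewrite divff.
rewrite powRD ?pnatr_eq0 ?implybT // powRr1 ?ler0n // mulrC; congr (_ * _).
Qed.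

Lemma min_le (a b : nat) (c : R) : c <= a%:R -> c <= b%:R -> c <= (minn a b)%:R.
Proof.
by move=> ha hb; case: (leqP a b).
Qed.

Lemma main_inv (T : finType) (G0 : rel T) (id0 : T -> R)
  (G0_sym : symmetric G0) (s : state R T) :
  reachable G0 id0 s -> DInv s /\
  (forall v, v \in alive s -> f (delta G0 s v) <= (rem_dash s v)%:R).
Proof.
elim=> [|s0 x s1 _ [inv good] st].
  split.
    split=> //.
    split=> //; first by move=> a b; rewrite /Gp_rel /= !andbF.
    by move=> v u1 u2; rewrite /Gp_rel /= !andbF.
  move=> v _.
  have d0 : delta G0 (init_state G0 id0) v = 0.
    rewrite /delta /nbrG /=; rewrite (_ : [set x in [set: T] | G0 v x] = [set x | G0 v x]) ?subrr //.
    by apply/setP => z; rewrite !inE.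
  have n0 : nbrGp (init_state G0 id0) v = finset.set0.
    by apply/setP => z; rewrite !inE andbF.
  rewrite d0 /rem_dash n0 big_set0 /f /= mul0r powRr0.
  by rewrite (_ : \max_(u in finset.set0) _ = 0%N) // big_pred0 // => z; rewrite inE.
move: st => [hx [U [l [r [m [[hU [ul lS] sl hr hm] [al' E' H' cid' w']]]]]]].
split; first exact: (DInv' inv hx hU ul lS al' E' H' cid').
move=> v hv'.
have hv : v \in alive s0 by move: hv'; rewrite al' in_setD1 => /andP[].
case: (step_cases inv hx hU ul lS sl hr al' E' H' w' hv') => [[d1 r1]|[y1 [y2 [a1 a2 d1 d2 [d3 r3]]]]].
  apply: (@le_trans _ _ (f (delta G0 s0 v))); first exact: f_mono.
  apply: (@le_trans _ _ (rem_dash s0 v)%:R); first exact: good.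
  by rewrite ler_nat.
apply: (@le_trans _ _ (f (delta G0 s0 v + 2))); first exact: f_mono.
rewrite f_2.
apply: (@le_trans _ _ (2 * (minn (minn (rem_dash s0 y1) (rem_dash s0 y2)) (rem_dash s0 v))%:R)).
  rewrite ler_pM2l ?ltr0n //; apply: min_le; last exact: good.
  apply: min_le.
    by apply: (@le_trans _ _ (f (delta G0 s0 y1))); [exact: f_mono|exact: good].
  by apply: (@le_trans _ _ (f (delta G0 s0 y2))); [exact: f_mono|exact: good].
by rewrite -natrM ler_nat.
Qed.

End Fin.

Unset Implicit Arguments.

Theorem lemma4 (R : realType) (T : finType) (G0 : rel T) (id0 : T -> R)
  (G0_sym : symmetric G0) (G0_irr : irreflexive G0)
  (G0_conn : forall x y : T, connect G0 x y)
  (id0_range : forall x : T, (0 <= id0 x <= 1)%R)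
  (s : state R T) (v : T) :
  reachable G0 id0 s -> v \in alive s ->
  (powR (2 : R) ((delta G0 s v)%:~R / 2) <= (rem_dash s v)%:R)%R.
Proof.
move=> rs hv; have [_ good] := @main_inv R T G0 id0 G0_sym s rs; exact: good hv.
Qed.
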